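(* Let $O$ be the origin of $\mathbb{R}^3$ and $R>0$. Let $x:[0,\tau_1]\to\mathbb{R}^3$ be a twice continuously differentiable trajectory with nowhere-vanishing velocity $\dot x(\tau)\neq 0$, satisfying the central-attraction equation $\ddot x(\tau) = -\kappa(\tau)\,x(\tau)$ with $\kappa(\tau)>0$ for all $\tau$. Let $A=x(0)$ with $|A|<R$, and suppose the trajectory reaches the sphere $\{|p|=R\}$, with $B = x(\tau_B)$ the first point where $|x(\tau)|=R$. Let $d=\dot x(0)/|\dot x(0)|$ be the initial direction, and let $P = A + t^\ast d$, where $t^\ast>0$ is the unique positive number with $|A+t^\ast d| = R$. Let $L_{AB}=\int_0^{\tau_B}|\dot x(\tau)|\,d\tau$ be the arclength of the trajectory from $A$ to $B$. Then $$L_{AB}\ \geq\ |AP|.$$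
   Context: This models a light ray in the near-field ball of radius $R$ around a black hole centered at $O$, with gravity approximated by Newtonian attraction toward the center, so that the acceleration is always directed toward $O$ and bends the path toward the center. $|AP|$ denotes the Euclidean distance between $A$ and $P$. *)

(* Defs.v *)
From Stdlib Require Import Reals.
From Coquelicot Require Import Coquelicot.
Open Scope R_scope.

Definition norm3 (a b c : R) : R := sqrt (a ^ 2 + b ^ 2 + c ^ 2).

Definition C2_on (a b : R) (f : R -> R) : Prop :=
  forall t, a <= t <= b ->
    ex_derive f t /\ ex_derive (Derive f) t /\ continuous (Derive (Derive f)) t.

(* Main.v *)
Require Import Defs.
From Stdlib Require Import Reals.
From Coquelicot Require Import Coquelicot.
From Stdlib Require Import Lra Psatz.
Open Scope R_scope.

Lemma mono (f : R -> R) a b : a <= b ->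
  (forall t, a <= t <= b -> exists l, is_derive f t l /\ l <= 0) -> f b <= f a.
Proof.
  intros Hab H.
  destruct (MVT_gen f a b (Derive f)) as [c [Hc Heq]].
  - rewrite Rmin_left, Rmax_right by lra. intros x Hx.
    destruct (H x ltac:(lra)) as [l [Hl _]]. rewrite (is_derive_unique _ _ _ Hl). exact Hl.
  - rewrite Rmin_left, Rmax_right by lra. intros x Hx.
    destruct (H x Hx) as [l [Hl _]]. apply continuity_pt_filterlim.
    exact (ex_derive_continuous f x (ex_intro _ l Hl)).
  - rewrite Rmin_left, Rmax_right in Hc by lra.
    destruct (H c Hc) as [l [Hl Hl0]]. rewrite (is_derive_unique _ _ _ Hl) in Heq. nra.
Qed.

Lemma clamp_cont (a b : R) t : a <= b -> continuous (fun s => Rmax a (Rmin b s)) t.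
Proof.
  intros Hab. apply continuity_pt_filterlim.
  intros eps Heps. exists eps. split; [lra|].
  intros y [_ Hy]. simpl in *. unfold R_dist, Rdist in *.
  unfold Rmax, Rmin in *.
  repeat destruct (Rle_dec _ _); unfold Rabs in *; repeat destruct (Rcase_abs _); lra.
Qed.

Lemma exd_cont (f : R -> R) x : ex_derive f x -> continuous f x.
Proof. intros H. exact (ex_derive_continuous f x H). Qed.

Lemma alg a1 a2 a3 v1 v2 v3 k n : 0 < k -> 0 < n ->
  n * n = v1 * (v1 * 1) + v2 * (v2 * 1) + v3 * (v3 * 1) ->
  (1 * v1 * v1 + a1 * (1 * (- k * a1)) +
   (1 * v2 * v2 + a2 * (1 * (- k * a2))) +
   (1 * v3 * v3 + a3 * (1 * (- k * a3)))) * / n +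
  (a1 * v1 + a2 * v2 + a3 * v3) *
  (- ((1 * (- k * a1) * ((1 + 1) * (v1 * 1)) +
       1 * (- k * a2) * ((1 + 1) * (v2 * 1)) +
       1 * (- k * a3) * ((1 + 1) * (v3 * 1))) * / (2 * n)) * / (n * n)) +
  - (1 * n) <= 0.
Proof.
  intros Hk Hn Hn2.
  set (r2 := a1*a1+a2*a2+a3*a3). set (dot := a1 * v1 + a2 * v2 + a3 * v3).
  set (V := v1 * (v1 * 1) + v2 * (v2 * 1) + v3 * (v3 * 1)).
  match goal with |- ?E <= 0 =>
    assert (HE : E = -k*(r2*(n*n) - dot*dot)/(n*n*n) + (V - n*n)/n)
      by (unfold r2, dot, V; field; lra) end.
  rewrite HE, Hn2. fold V. replace (V - V) with 0 by ring.
  assert (Hl : r2 * V - dot*dot = (a1*v2-a2*v1)^2 + (a2*v3-a3*v2)^2 + (a1*v3-a3*v1)^2)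
    by (unfold r2, V, dot; ring).
  fold V in Hn2. clearbody r2 dot V.
  assert (0 <= r2 * V - dot*dot) by (rewrite Hl; repeat apply Rplus_le_le_0_compat; apply pow2_ge_0).

  unfold Rdiv. rewrite Rmult_0_l, Rplus_0_r.
  assert (0 <= k * (r2 * V - dot * dot)) by (apply Rmult_le_pos; lra).
  assert (0 < / (V*n)).
  { apply Rinv_0_lt_compat. rewrite <- Hn2. repeat apply Rmult_lt_0_compat; lra. }
  replace (- k * (r2 * V - dot * dot)) with (- (k * (r2 * V - dot * dot))) by ring.
  rewrite Ropp_mult_distr_l_reverse.
  apply Rge_le, Ropp_0_le_ge_contravar, Rmult_le_pos; lra.
Qed.
Theorem proposition1
  (Rad tau1 tauB tstar : R) (x1 x2 x3 kappa : R -> R) :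
  0 < Rad ->
  0 <= tau1 ->
  C2_on 0 tau1 x1 -> C2_on 0 tau1 x2 -> C2_on 0 tau1 x3 ->
  (forall t, 0 <= t <= tau1 ->
     norm3 (Derive x1 t) (Derive x2 t) (Derive x3 t) <> 0) ->
  (forall t, 0 <= t <= tau1 -> 0 < kappa t) ->
  (forall t, 0 <= t <= tau1 ->
     Derive (Derive x1) t = - kappa t * x1 t /\
     Derive (Derive x2) t = - kappa t * x2 t /\
     Derive (Derive x3) t = - kappa t * x3 t) ->
  norm3 (x1 0) (x2 0) (x3 0) < Rad ->
  0 <= tauB <= tau1 ->
  norm3 (x1 tauB) (x2 tauB) (x3 tauB) = Rad ->
  (forall t, 0 <= t < tauB -> norm3 (x1 t) (x2 t) (x3 t) <> Rad) ->
  let v0 := norm3 (Derive x1 0) (Derive x2 0) (Derive x3 0) in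
  let P1 := x1 0 + tstar * (Derive x1 0 / v0) in
  let P2 := x2 0 + tstar * (Derive x2 0 / v0) in
  let P3 := x3 0 + tstar * (Derive x3 0 / v0) in
  0 < tstar ->
  norm3 P1 P2 P3 = Rad ->
  RInt (fun t => norm3 (Derive x1 t) (Derive x2 t) (Derive x3 t)) 0 tauB
    >= norm3 (P1 - x1 0) (P2 - x2 0) (P3 - x3 0).
Proof.
  intros HR Ht1 C1 C2 C3 Hv Hk Hode HA HtB HB _ v0 P1 P2 P3 Hts HP.
  assert (Hd : forall t, 0 <= t <= tau1 ->
    ex_derive x1 t /\ ex_derive (Derive x1) t /\ ex_derive x2 t /\
    ex_derive (Derive x2) t /\ ex_derive x3 t /\ ex_derive (Derive x3) t).
  { intros t Ht. destruct (C1 t Ht) as [? [? _]]. destruct (C2 t Ht) as [? [? _]].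
    destruct (C3 t Ht) as [? [? _]]. tauto. }
  assert (HV : forall t, 0 <= t <= tau1 ->
    0 < Derive x1 t ^ 2 + Derive x2 t ^ 2 + Derive x3 t ^ 2).
  { intros t Ht. specialize (Hv t Ht). unfold norm3 in Hv.
    destruct (Rle_lt_dec (Derive x1 t ^ 2 + Derive x2 t ^ 2 + Derive x3 t ^ 2) 0) as [Hle|]; [|lra].
    exfalso. apply Hv. replace (Derive x1 t ^ 2 + Derive x2 t ^ 2 + Derive x3 t ^ 2) with 0 by nra.
    apply sqrt_0. }
  set (f := fun t => norm3 (Derive x1 t) (Derive x2 t) (Derive x3 t)).
  assert (Hfc : forall s, 0 <= s <= tau1 -> continuous f s).
  { intros s Hs. apply exd_cont. unfold f, norm3.
    destruct (Hd s Hs) as [? [? [? [? [? ?]]]]]. specialize (HV s Hs).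
    auto_derive. simpl in HV. repeat split; auto; lra. }
  set (c := fun t => Rmax 0 (Rmin tauB t)).
  assert (Hcin : forall t, 0 <= c t <= tau1).
  { intros t. unfold c, Rmax, Rmin. repeat destruct Rle_dec; lra. }
  assert (Hcid : forall t, 0 <= t <= tauB -> c t = t).
  { intros t Ht. unfold c, Rmax, Rmin. repeat destruct Rle_dec; lra. }
  set (ft := fun t => f (c t)).
  assert (Hftc : forall t, continuous ft t).
  { intros t. unfold ft. apply continuous_comp. apply clamp_cont; lra. apply Hfc, Hcin. }
  set (S := fun t => RInt ft 0 t).
  assert (HS : forall t, is_derive S t (ft t)).
  { intros t. apply is_derive_RInt with (a := 0); [|apply Hftc].
    apply filter_forall. intros b. apply RInt_correct. apply ex_RInt_continuous.
    intros; apply Hftc. }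
  assert (HL : RInt f 0 tauB = S tauB).
  { unfold S. apply RInt_ext. rewrite Rmin_left, Rmax_right by lra.
    intros x Hx. unfold ft. rewrite Hcid; lra. }
  assert (HS0 : S 0 = 0). { unfold S. rewrite RInt_point. reflexivity. }
  assert (HSd : forall t, 0 <= t <= tauB -> Derive S t = sqrt (Derive x1 t ^ 2 + Derive x2 t ^ 2 + Derive x3 t ^ 2)).
  { intros t Ht. rewrite (is_derive_unique _ _ _ (HS t)). unfold ft. rewrite Hcid; auto. }
  clearbody S.
  set (g := fun t => (x1 t * Derive x1 t + x2 t * Derive x2 t + x3 t * Derive x3 t) /
     sqrt (Derive x1 t ^ 2 + Derive x2 t ^ 2 + Derive x3 t ^ 2) - S t).
  assert (Hg : forall t, 0 <= t <= tauB -> g t <= g 0).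
  { intros t Ht. apply (mono g 0 t); [lra|]. intros s Hs.
    assert (Hs1 : 0 <= s <= tau1) by lra.
    destruct (Hd s Hs1) as [? [? [? [? [? ?]]]]]. specialize (HV s Hs1) as HVs.
    destruct (Hode s Hs1) as [E1 [E2 E3]]. specialize (Hk s Hs1).
    eexists; split. unfold g; auto_derive.
    { simpl in HVs. repeat split; auto; try lra.
      - apply Rgt_not_eq, sqrt_lt_R0; lra.
      - exists (ft s); apply HS. }
    reflexivity.
    change (fun x => x1 x) with x1. change (fun x => x2 x) with x2. change (fun x => x3 x) with x3.
    change (fun x => Derive x1 x) with (Derive x1).
    change (fun x => Derive x2 x) with (Derive x2).
    change (fun x => Derive x3 x) with (Derive x3).
    change (fun x => S x) with S.
    rewrite E1, E2, E3, HSd by lra.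
    simpl in HVs.
    apply alg; [exact Hk | apply sqrt_lt_R0; lra | rewrite sqrt_sqrt; [ring | lra]]. }
  set (c0 := g 0).
  set (A2 := x1 0 ^ 2 + x2 0 ^ 2 + x3 0 ^ 2).
  set (H := fun t => x1 t ^ 2 + x2 t ^ 2 + x3 t ^ 2 - (A2 + 2 * S t * c0 + S t ^ 2)).
  assert (HH : H tauB <= H 0).
  { apply (mono H 0 tauB); [lra|]. intros s Hs.
    assert (Hs1 : 0 <= s <= tau1) by lra.
    destruct (Hd s Hs1) as [? [? [? [? [? ?]]]]]. specialize (HV s Hs1) as HVs.
    specialize (Hg s Hs).
    eexists; split. unfold H; auto_derive.
    { repeat split; auto; exists (ft s); apply HS. }
    reflexivity.
    change (fun x => x1 x) with x1. change (fun x => x2 x) with x2. change (fun x => x3 x) with x3.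
    change (fun x => S x) with S.
    rewrite HSd by lra.
    fold c0 in Hg. unfold g in Hg.
    set (n := sqrt (Derive x1 s ^ 2 + Derive x2 s ^ 2 + Derive x3 s ^ 2)) in *.
    assert (Hn : 0 < n) by (apply sqrt_lt_R0; lra).
    assert (Hdot : x1 s * Derive x1 s + x2 s * Derive x2 s + x3 s * Derive x3 s = n * ((x1 s * Derive x1 s + x2 s * Derive x2 s + x3 s * Derive x3 s) / n)) by (field; apply Rgt_not_eq; exact Hn).
    set (q := (x1 s * Derive x1 s + x2 s * Derive x2 s + x3 s * Derive x3 s) / n) in *.
    assert (0 <= n * (c0 + S s - q)) by (apply Rmult_le_pos; lra).
    clearbody q n c0. lra. }
  assert (HSnn : 0 <= S tauB).
  { assert (Hm : (fun t => - S t) tauB <= (fun t => - S t) 0).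
    { apply (mono (fun t => - S t) 0 tauB); [lra|]. intros s Hs.
      exists (- ft s). split. apply (is_derive_opp S s (ft s) (HS s)).
      assert (0 <= ft s) by (unfold ft, f, norm3; apply sqrt_pos). lra. }
    simpl in Hm. lra. }
  rewrite HL. unfold H in HH. rewrite HS0 in HH.
  assert (Hrho : x1 tauB ^ 2 + x2 tauB ^ 2 + x3 tauB ^ 2 = Rad ^ 2).
  { unfold norm3 in HB. rewrite <- HB, pow2_sqrt; [reflexivity|].
    repeat apply Rplus_le_le_0_compat; apply pow2_ge_0. }
  assert (HA2 : A2 < Rad ^ 2).
  { unfold norm3 in HA. fold A2 in HA.
    assert (0 <= A2) by (unfold A2; repeat apply Rplus_le_le_0_compat; apply pow2_ge_0).
    rewrite <- (pow2_sqrt A2) by assumption.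
    assert (0 <= sqrt A2) by apply sqrt_pos.
    simpl. rewrite !Rmult_1_r. apply Rmult_le_0_lt_compat; lra. }
  set (V0 := Derive x1 0 ^ 2 + Derive x2 0 ^ 2 + Derive x3 0 ^ 2).
  assert (HV0 : 0 < V0) by (apply HV; lra).
  assert (Hv0 : v0 * v0 = V0) by (unfold v0, norm3; apply sqrt_sqrt; lra).
  assert (Hv0p : 0 < v0) by (unfold v0, norm3; apply sqrt_lt_R0; exact HV0).
  set (d1 := Derive x1 0 / v0). set (d2 := Derive x2 0 / v0). set (d3 := Derive x3 0 / v0).
  assert (Hdd : d1 ^ 2 + d2 ^ 2 + d3 ^ 2 = 1).
  { unfold d1, d2, d3. replace (Derive x1 0 / v0) with (Derive x1 0 / v0) by reflexivity.
    transitivity (V0 / (v0 * v0)).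
    - unfold V0. field. apply Rgt_not_eq; exact Hv0p.
    - rewrite Hv0. field. apply Rgt_not_eq; exact HV0. }
  assert (Hc0 : c0 = x1 0 * d1 + x2 0 * d2 + x3 0 * d3).
  { unfold c0, g, d1, d2, d3. rewrite HS0. fold V0. unfold v0, norm3. fold V0. field.
    apply Rgt_not_eq, sqrt_lt_R0; exact HV0. }
  assert (HPsq : A2 + 2 * tstar * c0 + tstar ^ 2 = Rad ^ 2).
  { unfold norm3 in HP. rewrite <- HP, pow2_sqrt.
    - unfold P1, P2, P3. fold d1 d2 d3. rewrite Hc0.
      transitivity (A2 + 2 * tstar * (x1 0 * d1 + x2 0 * d2 + x3 0 * d3) + tstar ^ 2 * (d1 ^ 2 + d2 ^ 2 + d3 ^ 2)).
      + rewrite Hdd. ring.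
      + unfold A2. ring.
    - repeat apply Rplus_le_le_0_compat; apply pow2_ge_0. }
  assert (Hgoal : norm3 (P1 - x1 0) (P2 - x2 0) (P3 - x3 0) = tstar).
  { unfold norm3, P1, P2, P3. fold d1 d2 d3.
    replace ((x1 0 + tstar * d1 - x1 0) ^ 2 + (x2 0 + tstar * d2 - x2 0) ^ 2 +
             (x3 0 + tstar * d3 - x3 0) ^ 2) with (tstar ^ 2 * (d1 ^ 2 + d2 ^ 2 + d3 ^ 2)) by ring.
    rewrite Hdd, Rmult_1_r. apply sqrt_pow2. lra. }
  rewrite Hgoal. assert (HA2def : x1 0 ^ 2 + x2 0 ^ 2 + x3 0 ^ 2 = A2) by reflexivity. clearbody c0 A2. set (L := S tauB) in *. clearbody L.
  rewrite Hrho in HH.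
  assert (Hpos : tstar + 2 * c0 > 0).
  { destruct (Rle_lt_dec (tstar + 2 * c0) 0) as [Hle|]; [|lra].
    assert (tstar * (tstar + 2 * c0) <= tstar * 0) by (apply Rmult_le_compat_l; lra).
    assert (tstar * (tstar + 2 * c0) = (A2 + 2 * tstar * c0 + tstar ^ 2) - A2) by ring.
    lra. }
  apply Rle_ge. destruct (Rle_lt_dec tstar L) as [|Hlt]; [assumption|].
  exfalso.
  assert (0 < (tstar - L) * (L + tstar + 2 * c0)) by (apply Rmult_lt_0_compat; lra).
  assert ((tstar - L) * (L + tstar + 2 * c0) = (A2 + 2 * tstar * c0 + tstar ^ 2) - (A2 + 2 * L * c0 + L ^ 2)) by ring.
  rewrite HA2def in HH. lra.
Qed.
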